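(* For every $\theta\in[0,\pi)$, $\overline Q^{\,\theta}_S$ has a unique minimiser on $\mathbb{R}^2$, namely $$(\alpha^S_\theta,\beta^S_\theta)=\Big(-\frac k2(1+\cos2\theta),\ \frac k2\sin2\theta\Big),$$ and $\min_{\mathbb{R}^2}\overline Q^{\,\theta}_S=\bar e_S$.
   Context: Fix constants $c_1>0$, $c_2>0$, $c:=c_1+c_2$, $k>0$, $\bar e_S\ge0$, $\theta\in[0,\pi)$. Let $\bar A^\theta_S:=k\begin{pmatrix}-\cos^2\theta&\sin\theta\cos\theta\\ \sin\theta\cos\theta&-\sin^2\theta\end{pmatrix}$. For matrices $M\cdot N={\rm tr}(M^{\rm T}N)$, $|M|^2=M\cdot M$. For $M\in\mathbb{R}^{2\times2}_{\rm sym}$, $L^\theta_S(M):=-2c_1M\cdot\bar A^\theta_S+2c_2k\,{\rm tr}M+ck^2+\bar e_S$. For $(\alpha,\beta)\in\mathbb{R}^2$, $$\overline Q^{\,\theta}_S(\alpha,\beta):=\min_{\gamma\in\mathbb{R}}\Big\{c|M|^2+2c|\det M|+L^\theta_S(M): M=\begin{pmatrix}\alpha&\beta\\ \beta&\gamma\end{pmatrix}\Big\}.$$ *)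

(* Defs.v *)
From Stdlib Require Import Reals ClassicalEpsilon.
Open Scope R_scope.

(* A symmetric 2x2 matrix M = [[m11, m12],[m12, m22]] is represented by its
   three entries.  Abar^theta_S = k [[-cos^2, sin cos],[sin cos, -sin^2]]. *)
Definition Abar11 (k th : R) : R := k * (- (cos th)^2).
Definition Abar12 (k th : R) : R := k * (sin th * cos th).
Definition Abar22 (k th : R) : R := k * (- (sin th)^2).

(* M . N = tr(M^T N), for M = [[a,b],[b,g]] and N symmetric with entries n11 n12 n22 *)
Definition dot2 (a b g n11 n12 n22 : R) : R := a * n11 + b * n12 + b * n12 + g * n22.
Definition fnorm2 (a b g : R) : R := dot2 a b g a b g.
Definition det2 (a b g : R) : R := a * g - b * b.
Definition tr2 (a g : R) : R := a + g.

Definition LS (c1 c2 k eS th a b g : R) : R :=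
  - 2 * c1 * dot2 a b g (Abar11 k th) (Abar12 k th) (Abar22 k th)
  + 2 * c2 * k * tr2 a g + (c1 + c2) * k ^ 2 + eS.

Definition FS (c1 c2 k eS th a b g : R) : R :=
  (c1 + c2) * fnorm2 a b g + 2 * (c1 + c2) * Rabs (det2 a b g)
  + LS c1 c2 k eS th a b g.

Definition is_min_R (f : R -> R) (m : R) : Prop :=
  (exists g, f g = m) /\ (forall g, m <= f g).

(* Qbar^theta_S(alpha,beta) := min over gamma of FS.  Defined by choice as the
   (unique) minimum value; if no minimum existed the value would be unspecified. *)
Definition Qbar (c1 c2 k eS th a b : R) : R :=
  epsilon (inhabits 0) (fun m => is_min_R (FS c1 c2 k eS th a b) m).

(* Main.v *)
Require Import Defs.
From Stdlib Require Import Reals Lra Psatz ClassicalEpsilon.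
Open Scope R_scope.

Lemma core (c1 c2 k eS co s a b g : R) :
  0 < c1 -> 0 < c2 -> 0 < k -> s^2 + co^2 = 1 ->
  let F := (c1 + c2) * ((a*a + b*b + b*b + g*g)) + 2 * (c1 + c2) * Rabs (a*g - b*b)
   - 2 * c1 * (a * (k * - co^2) + b * (k * (s*co)) + b * (k*(s*co)) + g * (k * - s^2))
   + 2 * c2 * k * (a + g) + (c1 + c2) * k ^ 2 + eS in
  eS <= F /\ (F = eS -> a = - k * co^2 /\ b = k * (s * co)).
Proof.
  intros H1 H2 Hk Hsc F.
  set (c := c1 + c2).
  set (X := a*a + b*b + b*b + g*g + 2 * Rabs (a*g - b*b)).
  set (t := a + g). set (u := a - g).
  set (C := co^2 - s^2). set (S := 2 * s * co).
  set (w := 2 * S * b - C * u).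
  assert (HCS : C^2 + S^2 = 1) by (unfold C, S; nra).
  assert (HF : F - eS = c * X + k * (c1 + 2*c2) * t - c1 * k * w + c * k^2).
  { unfold F, X, c, t, w, S, C, u.
    replace (co^2) with (1 - s^2) by lra. ring_simplify. nra. }
  assert (Hd1 := Rle_abs (a*g - b*b)).
  assert (Hd2 := Rle_abs (- (a*g - b*b))). rewrite Rabs_Ropp in Hd2.
  assert (HXt : t^2 <= X) by (unfold X, t; nra).
  assert (HXu : u^2 + 4*b^2 <= X) by (unfold X, u; nra).
  assert (HL : (u^2 + 4*b^2) - w^2 = (S*u + 2*C*b)^2).
  { assert (E : (u^2 + 4*b^2)*(C^2+S^2) - w^2 = (S*u + 2*C*b)^2) by (unfold w; ring).
    rewrite HCS in E. lra. }
  assert (HX0 : 0 <= X) by nra.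
  set (m := sqrt X).
  assert (Hm0 : 0 <= m) by apply sqrt_pos.
  assert (Hmm : m * m = X) by (apply sqrt_sqrt; lra).
  assert (Hmt : - m <= t).
  { destruct (Rle_or_lt (-m) t) as [h|h]; auto. nra. }
  assert (Hw2 : w^2 <= m*m) by (pose proof (pow2_ge_0 (S*u + 2*C*b)); lra).
  assert (Hmw : w <= m).
  { destruct (Rle_or_lt w m) as [h|h]; auto. nra. }
  assert (Hc : 0 < c) by (unfold c; lra).
  assert (Hid : F - eS = c * (m - k)^2 + (c1 + 2*c2) * k * (t + m) + c1 * k * (m - w)).
  { rewrite HF, <- Hmm. unfold c. ring. }
  assert (0 <= c * (m - k)^2) by (apply Rmult_le_pos; [lra|apply pow2_ge_0]).
  assert (0 <= (c1 + 2*c2) * k * (t + m)) by (apply Rmult_le_pos; [apply Rmult_le_pos|]; lra).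
  assert (0 <= c1 * k * (m - w)) by (apply Rmult_le_pos; [apply Rmult_le_pos|]; lra).
  split.
  - lra.
  - intro HFe.
    assert (E1 : c * (m - k)^2 = 0) by lra.
    assert (E2 : (c1 + 2*c2) * k * (t + m) = 0) by lra.
    assert (E3 : c1 * k * (m - w) = 0) by lra.
    assert (Hmk : m = k) by (assert ((m-k)^2 = 0) by (apply (Rmult_eq_reg_l c); lra); nra).
    assert (Ht : t = - k) by (assert (t + m = 0) by (apply (Rmult_eq_reg_l ((c1+2*c2)*k)); nra); lra).
    assert (Hw : w = k) by (assert (m - w = 0) by (apply (Rmult_eq_reg_l (c1*k)); nra); lra).
    assert (Hz : (S*u + 2*C*b)^2 = 0).
    { pose proof (pow2_ge_0 (S*u + 2*C*b)). rewrite Hmk in Hmm.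
      assert (w^2 = k*k) by (rewrite Hw; ring). lra. }
    assert (Hz' : S*u + 2*C*b = 0) by ((apply Rsqr_0_uniq; unfold Rsqr; rewrite <- Hz; ring)).
    assert (Hw' : C*u - 2*S*b = - k) by (unfold w in Hw; lra).
    assert (I1 : u*(C^2+S^2) = C*(C*u-2*S*b) + S*(S*u+2*C*b)) by ring.
    assert (I2 : 2*b*(C^2+S^2) = - S*(C*u-2*S*b) + C*(S*u+2*C*b)) by ring.
    rewrite HCS, Hw', Hz' in I1, I2.
    assert (Hu : u = - k * C) by lra.
    assert (Hb : 2 * b = k * S) by lra.
    unfold t, u, C, S in *. split; nra.
Qed.
Lemma FS_cont c1 c2 k eS th a b : continuity (FS c1 c2 k eS th a b).
Proof.
  unfold FS, LS, fnorm2, dot2, det2, tr2.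
  apply continuity_plus; [apply continuity_plus|].
  - reg.
  - apply continuity_mult; [apply continuity_const; intros ? ?; auto|].
    apply (continuity_comp (fun g => a*g - b*b) Rabs); [reg | apply Rcontinuity_abs].
  - reg.
Qed.

Lemma coerc_min (f : R -> R) (R0 : R) : continuity f -> 0 <= R0 ->
  (forall g, R0 <= Rabs g -> f 0 <= f g) -> exists m, is_min_R f m.
Proof.
  intros Hc HR Hg.
  destruct (continuity_ab_min f (-R0) R0) as [mx [H1 H2]]; [lra| intros; apply Hc |].
  exists (f mx). split; [eauto|].
  intro g. destruct (Rle_or_lt R0 (Rabs g)) as [h|h].
  - apply Rle_trans with (f 0); [apply H1; lra | auto].
  - apply H1. apply Rabs_def2 in h. lra.
Qed.

Lemma FS_coerc c1 c2 k eS th a b : 0 < c1 -> 0 < c2 ->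
  exists m, is_min_R (FS c1 c2 k eS th a b) m.
Proof.
  intros H1 H2.
  set (c := c1 + c2). set (lam := 2*c1*k*sin th^2 + 2*c2*k).
  assert (Hc : 0 < c) by (unfold c; lra).
  apply coerc_min with (Rabs lam / c + 2 * Rabs b + 1).
  - apply FS_cont.
  - pose proof (Rabs_pos lam); pose proof (Rabs_pos b).
    assert (0 <= Rabs lam / c) by (apply Rmult_le_pos; [lra| left; apply Rinv_0_lt_compat; lra]). lra.
  - intros g Hg.
    assert (E : FS c1 c2 k eS th a b g - FS c1 c2 k eS th a b 0
      = c*g^2 + 2*c*(Rabs (det2 a b g) - Rabs (det2 a b 0)) + lam * g).
    { unfold FS, LS, fnorm2, dot2, det2, tr2, Abar11, Abar12, Abar22, lam, c. ring. }
    assert (E0 : Rabs (det2 a b 0) = b*b).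
    { unfold det2. replace (a*0 - b*b) with (-(b*b)) by ring. rewrite Rabs_Ropp.
      apply Rabs_right. nra. }
    rewrite E0 in E.
    pose proof (Rabs_pos (det2 a b g)).
    set (G := Rabs g) in *. set (B := Rabs b) in *. set (L := Rabs lam) in *.
    assert (HG2 : g^2 = G*G) by (unfold G; rewrite <- Rabs_mult, <- (Rabs_right (g^2)); [f_equal; ring| nra]).
    assert (HB2 : b*b = B*B) by (unfold B; rewrite <- Rabs_mult; rewrite Rabs_right; nra).
    assert (Hlg : - (L * G) <= lam * g) by (unfold L, G; rewrite <- Rabs_mult; pose proof (Rle_abs (-(lam*g))); rewrite Rabs_Ropp in *; lra).
    assert (HB0 : 0 <= B) by apply Rabs_pos.
    assert (HL0 : 0 <= L) by apply Rabs_pos.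
    assert (HLc : L = c * (L / c)) by (field; lra).
    set (q := L / c) in *.
    assert (G - q >= 2*B + 1) by lra.
    assert (c*G*(G - q) >= c*G*(2*B+1)).
    { apply Rle_ge, Rmult_le_compat_l; [nra|lra]. }
    assert (c*G*(2*B+1) >= c*(2*B+1)*(2*B+1)) by nra.
    nra.
Qed.

Lemma coreFS c1 c2 k eS th a b g : 0 < c1 -> 0 < c2 -> 0 < k ->
  eS <= FS c1 c2 k eS th a b g /\
  (FS c1 c2 k eS th a b g = eS -> a = - k * cos th ^2 /\ b = k * (sin th * cos th)).
Proof.
  intros H1 H2 Hk.
  pose proof (core c1 c2 k eS (cos th) (sin th) a b g H1 H2 Hk) as H.
  assert (Hsc : sin th ^2 + cos th ^2 = 1) by (pose proof (sin2_cos2 th); unfold Rsqr in *; nra).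
  specialize (H Hsc). simpl in H.
  assert (E : FS c1 c2 k eS th a b g =
    (c1 + c2) * ((a*a + b*b + b*b + g*g)) + 2 * (c1 + c2) * Rabs (a*g - b*b)
   - 2 * c1 * (a * (k * - cos th^2) + b * (k * (sin th*cos th)) + b * (k*(sin th*cos th)) + g * (k * - sin th^2))
   + 2 * c2 * k * (a + g) + (c1 + c2) * k ^ 2 + eS).
  { unfold FS, LS, fnorm2, dot2, det2, tr2, Abar11, Abar12, Abar22. ring. }
  rewrite E. exact H.
Qed.

Theorem lemma4p2 (c1 c2 k eS th : R) :
  0 < c1 -> 0 < c2 -> 0 < k -> 0 <= eS -> 0 <= th < PI ->
  (* the minimum over gamma defining Qbar exists for every (alpha, beta) *)
  (forall a b, is_min_R (FS c1 c2 k eS th a b) (Qbar c1 c2 k eS th a b)) /\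
  (* (alpha_theta, beta_theta) is a minimiser with minimum value eS *)
  Qbar c1 c2 k eS th (- (k / 2) * (1 + cos (2 * th))) ((k / 2) * sin (2 * th)) = eS /\
  (forall a b, eS <= Qbar c1 c2 k eS th a b) /\
  (* uniqueness of the minimiser *)
  (forall a b, Qbar c1 c2 k eS th a b = eS ->
     a = - (k / 2) * (1 + cos (2 * th)) /\ b = (k / 2) * sin (2 * th)).
Proof.
  intros H1 H2 Hk HeS Hth.
  assert (Hspec : forall a b, is_min_R (FS c1 c2 k eS th a b) (Qbar c1 c2 k eS th a b)).
  { intros a b. unfold Qbar. apply epsilon_spec. apply FS_coerc; auto. }
  assert (Hlow : forall a b, eS <= Qbar c1 c2 k eS th a b).
  { intros a b. destruct (Hspec a b) as [[g0 Hg0] _]. rewrite <- Hg0.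
    apply (coreFS c1 c2 k eS th a b g0 H1 H2 Hk). }
  assert (Ha : - (k / 2) * (1 + cos (2 * th)) = - k * cos th ^ 2).
  { rewrite cos_2a_cos. field. }
  assert (Hb : (k / 2) * sin (2 * th) = k * (sin th * cos th)).
  { rewrite sin_2a. field. }
  assert (Hsc : sin th ^2 + cos th ^2 = 1) by (pose proof (sin2_cos2 th); unfold Rsqr in *; nra).
  split; [exact Hspec|]. split; [|split; [exact Hlow|]].
  - rewrite Ha, Hb. apply Rle_antisym; [|apply Hlow].
    destruct (Hspec (- k * cos th ^ 2) (k * (sin th * cos th))) as [_ Hm].
    eapply Rle_trans; [apply (Hm (- k * sin th ^ 2))|].
    right.
    assert (Hd : Rabs (det2 (- k * cos th ^ 2) (k * (sin th * cos th)) (- k * sin th ^ 2)) = 0).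
    { unfold det2. replace (- k * cos th ^ 2 * (- k * sin th ^ 2) - k * (sin th * cos th) * (k * (sin th * cos th))) with 0 by ring.
      apply Rabs_R0. }
    unfold FS. rewrite Hd. unfold LS, fnorm2, dot2, tr2, Abar11, Abar12, Abar22.
    set (P := sin th ^2 + cos th ^2) in Hsc.
    transitivity ((c1+c2)*k^2*P^2 - 2*c1*k^2*P^2 - 2*c2*k^2*P + (c1+c2)*k^2 + eS).
    + unfold P. ring.
    + rewrite Hsc. ring.
  - intros a b HQ. rewrite Ha, Hb.
    destruct (Hspec a b) as [[g0 Hg0] _].
    apply (coreFS c1 c2 k eS th a b g0 H1 H2 Hk). congruence.
Qed.
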